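(* Let $X,Y$ be Banach spaces and let $T(t):X\to X$ and $S(-t):Y\to Y$, $t\ge0$, be $C_0$ semigroups with $|T(t)|\le e^{\mu_st}$ and $|S(-t)|\le e^{-\mu_ut}$ for $t\ge0$. Equip $X\times Y$ with the max norm $|(x,y)|=\max\{|x|,|y|\}$ and let $B_1:X\times Y\to X$, $B_2:X\times Y\to Y$ be Lipschitz with $\mathrm{Lip}\,B_i\le\varepsilon$. Let $H$ be the continuous correspondence induced by $x(t)=T(t-t_1)x_1+\int_{t_1}^tT(t-s)B_1(x(s),y(s))\,ds$, $y(t)=S(t-t_2)y_2-\int_t^{t_2}S(t-s)B_2(x(s),y(s))\,ds$, $t_1\le t\le t_2$ (see context). Assume $\mu_u-\mu_s-2\varepsilon>0$. Take $\alpha,\beta$ with $\frac{\varepsilon}{\mu_u-\mu_s-\varepsilon}\le\alpha,\beta<1$ and $\lambda_u=e^{-\mu_u+\varepsilon}$, $\lambda_s=e^{\mu_s+\varepsilon}$. Then for every $t\ge0$, $H(t)$ satisfies the (A)$(\alpha,\lambda_u^t)$ (B)$(\beta,\lambda_s^t)$ condition. Moreover, if $\alpha,\beta\in(\frac{\varepsilon}{\mu_u-\mu_s-\varepsilon},1)$ and $t\ge\epsilon_1>0$, then $H(t)$ satisfies (A)$(\alpha;k_\alpha\alpha,\lambda_u^t)$ (B)$(\beta;k_\beta\beta,\lambda_s^t)$, where $k_h=\frac{(\mu_u-\mu_s-\varepsilon-\frac{\varepsilon}{h})e^{-(\mu_u-\mu_s-\varepsilon)\epsilon_1}+\frac{\varepsilon}{h}}{\mu_u-\mu_s-\varepsilon}<1$,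 $h=\alpha,\beta$.
   Context: For $t\le0$ write $S(t)$ for the operator $S(-(-t))$ of the given semigroup, so $S(t-t_2)$, $S(t-s)$ make sense for $t\le t_2$, $t\le s$. For given $x_1\in X$, $y_2\in Y$ and $t_1\le t_2$ the displayed integral system has a unique continuous solution $(x(t),y(t))$ on $[t_1,t_2]$ with $x(t_1)=x_1$, $y(t_2)=y_2$. For $s\ge0$, the correspondence $H(s):X\times Y\to X\times Y$ is defined by: $(x_2,y_2)\in H(s)(x_1,y_1)$ iff there is a continuous $(x(t),y(t))$, $0\le t\le s$, satisfying the system with $t_1=0$, $t_2=s$, $(x(0),y(0))=(x_1,y_1)$, $(x(s),y(s))=(x_2,y_2)$. (A)(B) condition for a correspondence $H$ with graph in $(X\times Y)\times(X\times Y)$: (A)$(\alpha;\alpha',\lambda_u)$(B)$(\beta;\beta',\lambda_s)$ holds if for all $(x_1,y_1)\times(x_2,y_2),(x_1',y_1')\times(x_2',y_2')\in\mathrm{Graph}H$: $|x_1-x_1'|\le\alpha|y_1-y_1'|$ implies $|x_2-x_2'|\le\alpha'|y_2-y_2'|$ and $|y_1-y_1'|\le\lambda_u|y_2-y_2'|$; $|y_2-y_2'|\le\beta|x_2-x_2'|$ implies $|y_1-y_1'|\le\beta'|x_1-x_1'|$ and $|x_2-x_2'|\le\lambda_s|x_1-x_1'|$. (A)$(\alpha,\lambda_u)$(B)$(\beta,\lambda_s)$ means $\alpha'=\alpha$, $\beta'=\beta$. *)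

(* Defs.v *)
From Stdlib Require Import Reals Lra.
From Coquelicot Require Export Coquelicot.
Export Reals.
Open Scope R_scope.

Section Defs.
Context {X : CompleteNormedModule R_AbsRing}.

(* A C_0 semigroup (T(t))_{t>=0} of bounded linear operators on X
   (values at negative t are irrelevant). *)
Definition C0_semigroup (T : R -> X -> X) : Prop :=
  (forall t, 0 <= t -> forall x y, T t (plus x y) = plus (T t x) (T t y)) /\
  (forall t, 0 <= t -> forall (a : R) x, T t (scal a x) = scal a (T t x)) /\
  (forall t, 0 <= t -> exists M, forall x, norm (T t x) <= M * norm x) /\
  (forall x, T 0 x = x) /\
  (forall t s, 0 <= t -> 0 <= s -> forall x, T (t + s) x = T t (T s x)) /\
  (forall x, filterlim (fun t => T t x) (at_right 0) (locally x)).

End Defs.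

Definition cont_on {V : UniformSpace} (a b : R) (f : R -> V) : Prop :=
  forall t, a <= t <= b ->
    filterlim f (within (fun u => a <= u <= b) (locally t)) (locally (f t)).

Section System.
Context {X Y : CompleteNormedModule R_AbsRing}.
Variables (T : R -> X -> X)
          (U : R -> Y -> Y)   (* U t = S(-t), t >= 0 ; so S(t-s) = U (s-t) *)
          (B1 : X * Y -> X) (B2 : X * Y -> Y).

(* (x,y) is a solution on [t1,t2] of
   x(t) = T(t-t1)x1 + \int_{t1}^t T(t-s)B1(x(s),y(s)) ds,
   y(t) = S(t-t2)y2 - \int_t^{t2} S(t-s)B2(x(s),y(s)) ds. *)
Definition solves (t1 t2 : R) (x1 : X) (y2 : Y) (x : R -> X) (y : R -> Y) : Prop :=
  cont_on t1 t2 x /\ cont_on t1 t2 y /\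
  forall t, t1 <= t <= t2 ->
    is_RInt (fun s => T (t - s) (B1 (x s, y s))) t1 t (minus (x t) (T (t - t1) x1)) /\
    is_RInt (fun s => U (s - t) (B2 (x s, y s))) t t2 (minus (U (t2 - t) y2) (y t)).

Definition Hcorr (s : R) (p q : X * Y) : Prop :=
  exists (x : R -> X) (y : R -> Y),
    solves 0 s (fst p) (snd q) x y /\
    x 0 = fst p /\ y 0 = snd p /\ x s = fst q /\ y s = snd q.

End System.

Definition AB_cond {X Y : NormedModule R_AbsRing} (H : X * Y -> X * Y -> Prop)
    (alpha alpha' lu beta beta' ls : R) : Prop :=
  forall x1 y1 x2 y2 x1' y1' x2' y2',
    H (x1, y1) (x2, y2) -> H (x1', y1') (x2', y2') ->
    (norm (minus x1 x1') <= alpha * norm (minus y1 y1') ->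
       norm (minus x2 x2') <= alpha' * norm (minus y2 y2') /\
       norm (minus y1 y1') <= lu * norm (minus y2 y2')) /\
    (norm (minus y2 y2') <= beta * norm (minus x2 x2') ->
       norm (minus y1 y1') <= beta' * norm (minus x1 x1') /\
       norm (minus x2 x2') <= ls * norm (minus x1 x1')).

Definition kfac (mu_u mu_s eps eps1 h : R) : R :=
  ((mu_u - mu_s - eps - eps / h) * exp (- (mu_u - mu_s - eps) * eps1) + eps / h)
  / (mu_u - mu_s - eps).

(* Main.v *)
Require Import Defs.
From Stdlib Require Import Reals Lra.
From Coquelicot Require Import Coquelicot.
Open Scope R_scope.

Lemma exp_le_mono x y : x <= y -> exp x <= exp y.
Proof. intros H; destruct H as [H|H]; [left; apply exp_increasing; auto | subst; lra]. Qed.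

Lemma cont_Rmax f g x : continuity_pt f x -> continuity_pt g x ->
  continuity_pt (fun s => Rmax (f s) (g s)) x.
Proof.
  intros Hf Hg.
  apply continuity_pt_ext with (f := fun s => (f s + g s + Rabs (f s - g s)) / 2).
  { intros s. unfold Rmax; destruct (Rle_dec (f s) (g s)).
    - rewrite Rabs_left1 by lra. lra.
    - rewrite Rabs_right by lra. lra. }
  apply continuity_pt_ext with (f := mult_fct (plus_fct (plus_fct f g) (comp Rabs (minus_fct f g))) (fct_cte (/2))).
  { intros s. unfold plus_fct, mult_fct, minus_fct, comp, fct_cte. simpl. lra. }
  apply continuity_pt_mult; [|apply continuity_pt_const; intros ? ?; reflexivity].
  apply continuity_pt_plus.
  - apply continuity_pt_plus; auto.
  - apply continuity_pt_comp; [apply continuity_pt_minus; auto| apply Rcontinuity_abs].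
Qed.

Lemma ex_RInt_cont (f : R -> R) a b : (forall z, continuity_pt f z) -> ex_RInt f a b.
Proof. intros H. apply (@ex_RInt_continuous R_CompleteNormedModule). intros z _. apply continuity_pt_filterlim. auto. Qed.

Lemma int_b mu eps M B s0 t : s0 <= t ->
  is_RInt (fun s => exp (-mu*(s-s0)) * (eps*(M*(exp (-(mu-eps)*(t-s))*B)))) s0 t
    (M*B*(exp (-(mu-eps)*(t-s0)) - exp (-mu*(t-s0)))).
Proof.
  intros H.
  set (F := fun s => -(M*B*(exp (-mu*(s-s0))*exp (-(mu-eps)*(t-s))))).
  replace (M*B*(exp (-(mu-eps)*(t-s0)) - exp (-mu*(t-s0)))) with (minus (F t) (F s0)).
  2:{ unfold F, minus, plus, opp; simpl.
      replace (-mu*(s0-s0)) with 0 by ring. replace (-(mu-eps)*(t-t)) with 0 by ring.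
      rewrite exp_0. ring. }
  apply (@is_RInt_derive R_CompleteNormedModule).
  - intros x _. unfold F. auto_derive; auto. unfold Rminus; ring.
  - intros x _. apply (@ex_derive_continuous R_AbsRing R_NormedModule). auto_derive; auto.
Qed.

Lemma int_a ms mu eps M B tau t : mu - ms - eps <> 0 -> 0 <= tau ->
  is_RInt (fun s => exp (ms*(tau-s)) * (eps*(M*(exp (-(mu-eps)*(t-s))*B)))) 0 tau
    (M*B*eps/(mu-ms-eps)*(exp (-(mu-eps)*(t-tau)) - exp (ms*tau)*exp (-(mu-eps)*(t-0)))).
Proof.
  intros Hc H.
  set (F := fun s => M*B*eps/(mu-ms-eps)*(exp (ms*(tau-s))*exp (-(mu-eps)*(t-s)))).
  replace (M*B*eps/(mu-ms-eps)*(exp (-(mu-eps)*(t-tau)) - exp (ms*tau)*exp (-(mu-eps)*(t-0))))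
    with (minus (F tau) (F 0)).
  2:{ unfold F, minus, plus, opp; simpl.
      replace (ms*(tau-tau)) with 0 by ring. replace (ms*(tau-0)) with (ms*tau) by ring.
      rewrite exp_0. ring. }
  apply (@is_RInt_derive R_CompleteNormedModule).
  - intros x _. unfold F. auto_derive; auto. unfold Rminus; field. auto.
  - intros x _. apply (@ex_derive_continuous R_AbsRing R_NormedModule). auto_derive; auto.
Qed.

Lemma cont_mul f g x : continuity_pt f x -> continuity_pt g x -> continuity_pt (fun s => f s * g s) x.
Proof. intros Hf Hg. exact (continuity_pt_mult f g x Hf Hg). Qed.
Lemma cont_div f g x : continuity_pt f x -> continuity_pt g x -> g x <> 0 -> continuity_pt (fun s => f s / g s) x.
Proof. intros Hf Hg H. exact (continuity_pt_div f g x Hf Hg H). Qed.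
Lemma cont_const k x : continuity_pt (fun _ => k) x.
Proof. apply continuity_pt_const. intros ? ?; reflexivity. Qed.

Ltac smooth := match goal with |- continuity_pt ?f ?x => apply (proj2 (continuity_pt_filterlim f x)); apply (@ex_derive_continuous R_AbsRing R_NormedModule f x) end; auto_derive; auto.

Lemma limit_eta x z C : 0 <= C -> (forall eta, 0 < eta -> x <= z + eta * C) -> x <= z.
Proof.
  intros HC H. destruct (Rle_dec x z) as [|Hn]; auto.
  exfalso. assert (Hp : 0 < (x - z) / (C + 1)) by (apply Rdiv_lt_0_compat; lra).
  specialize (H _ Hp).
  assert ((x - z) / (C + 1) * C < x - z).
  { apply Rmult_lt_reg_r with (C + 1); [lra|].
    field_simplify; [|lra]. nra. }
  lra.
Qed.
Lemma coreA (ms mu eps al t : R) (a b : R -> R) :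
  0 <= eps -> 0 < mu - ms - eps -> eps <= al * (mu - ms - eps) -> 0 <= al < 1 -> 0 <= t ->
  (forall s, continuity_pt a s) -> (forall s, continuity_pt b s) ->
  (forall s, 0 <= a s) -> (forall s, 0 <= b s) ->
  (forall tau, 0 <= tau <= t -> a tau <= exp (ms*tau) * a 0 + RInt (fun s => exp (ms*(tau-s)) * (eps * Rmax (a s) (b s))) 0 tau) ->
  (forall sg, 0 <= sg <= t -> b sg <= exp (-mu*(t-sg)) * b t + RInt (fun s => exp (-mu*(s-sg)) * (eps * Rmax (a s) (b s))) sg t) ->
  a 0 <= al * b 0 ->
  a t <= ((al*(mu-ms-eps) - eps) * exp (-(mu-ms-eps)*t) + eps)/(mu-ms-eps) * b t /\
  b 0 <= exp ((-mu+eps)*t) * b t.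
Proof.
  intros Heps Hc Hal [Hal0 Hal1] Ht ca cb a0 b0 HI HII H0.
  assert (cm : forall s, continuity_pt (fun s => Rmax (a s) (b s)) s) by (intros; apply cont_Rmax; auto).
  assert (key : forall eta, 0 < eta -> forall s, 0 <= s <= t ->
            Rmax (a s) (b s) <= exp (-(mu-eps)*(t-s)) * (b t + eta)).
  { intros eta Heta.
    set (B := b t + eta). assert (HB : 0 < B) by (unfold B; specialize (b0 t); lra).
    set (E := fun s => exp (-(mu-eps)*(t-s)) * B).
    assert (HE : forall s, 0 < E s) by (intros; unfold E; apply Rmult_lt_0_compat; [apply exp_pos|auto]).
    set (al' := (al + 1) / 2).
    assert (Hal' : al < al' < 1) by (unfold al'; lra).
    set (f := fun s => Rmax (a s / (al' * E s)) (b s / E s)).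
    assert (cE : forall s, continuity_pt E s) by (intros; unfold E, B; smooth).
    assert (cf : forall s, 0 <= s <= t -> continuity_pt f s).
    { intros s _. unfold f. apply cont_Rmax.
      - apply cont_div; [auto | apply cont_mul; [apply cont_const | auto] | apply Rgt_not_eq, Rmult_lt_0_compat; auto; lra].
      - apply cont_div; [auto | auto | apply Rgt_not_eq; apply HE]. }
    destruct (continuity_ab_maj f 0 t Ht cf) as [s0 [Hmax Hs0]].
    set (M := f s0).
    assert (HM0 : 0 <= M).
    { unfold M, f. eapply Rle_trans; [|apply Rmax_r]. apply Rdiv_le_0_compat; auto. }
    assert (bnd : forall s, 0 <= s <= t -> a s <= al' * M * E s /\ b s <= M * E s).
    { intros s Hs. specialize (Hmax s Hs). fold M in Hmax. unfold f in Hmax.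
      assert (H1 := Rle_trans _ _ _ (Rmax_l _ _) Hmax).
      assert (H2 := Rle_trans _ _ _ (Rmax_r _ _) Hmax).
      assert (0 < al' * E s) by (apply Rmult_lt_0_compat; auto; lra).
      specialize (HE s). split.
      - apply Rmult_le_reg_r with (/ (al' * E s)). apply Rinv_0_lt_compat; auto.
        replace (al' * M * E s * / (al' * E s)) with M by (field; split; lra). exact H1.
      - apply Rmult_le_reg_r with (/ E s). apply Rinv_0_lt_compat; auto.
        replace (M * E s * / E s) with M by (field; lra). exact H2. }
    assert (mbnd : forall s, 0 <= s <= t -> Rmax (a s) (b s) <= M * E s).
    { intros s Hs. destruct (bnd s Hs). specialize (HE s). apply Rmax_lub; auto.
      eapply Rle_trans; eauto. apply Rmult_le_compat_r; [lra|]. nra. }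
    assert (HM1 : M <= 1).
    { assert (HMcase : M = a s0 / (al' * E s0) \/ M = b s0 / E s0)
        by (unfold M, f, Rmax; destruct Rle_dec; auto).
      assert (HEs0 := HE s0).
      destruct HMcase as [HMa|HMb].
      - assert (Ha : a s0 = al' * M * E s0).
        { rewrite HMa. field. split; lra. }
        assert (HIs := HI s0 Hs0).
        assert (Hint : RInt (fun s => exp (ms*(s0-s)) * (eps * Rmax (a s) (b s))) 0 s0 <=
                       RInt (fun s => exp (ms*(s0-s)) * (eps * (M * (exp (-(mu-eps)*(t-s)) * B)))) 0 s0).
        { apply RInt_le; [lra| | |].
          - apply ex_RInt_cont. intros z. apply cont_mul; [smooth|]. apply cont_mul; [apply cont_const|auto].
          - apply ex_RInt_cont. intros z. unfold B. smooth.
          - intros x Hx. apply Rmult_le_compat_l; [left; apply exp_pos|].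
            apply Rmult_le_compat_l; auto. apply mbnd. lra. }
        rewrite (is_RInt_unique _ _ _ _ (int_a ms mu eps M B s0 t ltac:(lra) ltac:(lra))) in Hint.
        assert (Ha0 : a 0 <= al * (M * E 0)).
        { eapply Rle_trans; [apply H0|]. apply Rmult_le_compat_l; auto. apply bnd. lra. }
        unfold E in Ha0, Ha.
        set (Q := exp (-(mu-eps)*(t-s0))) in *.
        set (P := exp (ms*s0) * exp (-(mu-eps)*(t-0))) in *.
        assert (HPQ : P <= Q).
        { unfold P, Q. rewrite <- exp_plus. apply exp_le_mono. nra. }
        assert (HQ : 0 < Q) by apply exp_pos.
        assert (Hk : eps / (mu - ms - eps) <= al).
        { apply Rmult_le_reg_r with (mu - ms - eps); auto. field_simplify; lra. }
        assert (Hk0 : 0 <= eps / (mu - ms - eps)) by (apply Rdiv_le_0_compat; lra).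
        assert (Hexp : 0 < exp (ms*s0)) by apply exp_pos.
        assert (Y : exp (ms*s0) * a 0 <= exp (ms*s0) * (al * (M * (exp (-(mu-eps)*(t-0)) * B))))
          by (apply Rmult_le_compat_l; lra).
        assert (X1 : al' * M * (Q * B) <= exp (ms * s0) * (al * (M * (exp (-(mu-eps)*(t-0)) * B))) +
                      M * B * eps / (mu - ms - eps) * (Q - P)) by lra.
        replace (exp (ms * s0) * (al * (M * (exp (-(mu-eps)*(t-0)) * B)))) with (al * M * B * P) in X1
          by (unfold P; ring).
        replace (M * B * eps / (mu - ms - eps) * (Q - P)) with (M * B * (eps / (mu - ms - eps)) * (Q - P)) in X1
          by (field; lra).
        assert (MB0 : 0 <= M * B) by nra.
        assert (X2 : M * B * (eps / (mu - ms - eps)) * (Q - P) <= M * B * al * (Q - P)).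
        { apply Rmult_le_compat_r; [lra|]. apply Rmult_le_compat_l; auto. }
        assert (X3 : (al' - al) * (M * B * Q) <= 0) by nra.
        assert (X4 : 0 < (al' - al) * (B * Q)) by (apply Rmult_lt_0_compat; nra).
        nra.
      - assert (Hb : b s0 = M * E s0).
        { rewrite HMb. field. lra. }
        assert (HIIs := HII s0 Hs0).
        assert (Hint : RInt (fun s => exp (-mu*(s-s0)) * (eps * Rmax (a s) (b s))) s0 t <=
                       RInt (fun s => exp (-mu*(s-s0)) * (eps * (M * (exp (-(mu-eps)*(t-s)) * B)))) s0 t).
        { apply RInt_le; [lra| | |].
          - apply ex_RInt_cont. intros z. apply cont_mul; [smooth|]. apply cont_mul; [apply cont_const|auto].
          - apply ex_RInt_cont. intros z. unfold B. smooth.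
          - intros x Hx. apply Rmult_le_compat_l; [left; apply exp_pos|].
            apply Rmult_le_compat_l; auto. apply mbnd. lra. }
        rewrite (is_RInt_unique _ _ _ _ (int_b mu eps M B s0 t ltac:(lra))) in Hint.
        unfold E in Hb.
        assert (HX : 0 < exp (-mu*(t-s0))) by apply exp_pos.
        assert (X1 : M * B * exp (-mu*(t-s0)) <= exp (-mu*(t-s0)) * b t) by nra.
        assert (X2 : M * B <= b t).
        { apply Rmult_le_reg_l with (exp (-mu*(t-s0))); auto. lra. }
        destruct (Rle_dec M 1) as [|Hn]; auto.
        assert (0 < (M - 1) * B) by (apply Rmult_lt_0_compat; lra).
        unfold B in *. assert (0 <= b t) by apply b0. lra. }
    intros s Hs. eapply Rle_trans; [apply mbnd; auto|].
    change (exp (-(mu-eps)*(t-s)) * B) with (E s).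
    specialize (HE s). nra. }
  assert (HC : 0 <= ((al*(mu-ms-eps) - eps) * exp (-(mu-ms-eps)*t) + eps)/(mu-ms-eps)).
  { apply Rdiv_le_0_compat; auto. assert (0 < exp (-(mu-ms-eps)*t)) by apply exp_pos. nra. }
  split.
  - apply limit_eta with (C := ((al*(mu-ms-eps) - eps) * exp (-(mu-ms-eps)*t) + eps)/(mu-ms-eps)); auto.
    intros eta Heta. set (B := b t + eta).
    assert (HIt := HI t ltac:(lra)).
    assert (Hint : RInt (fun s => exp (ms*(t-s)) * (eps * Rmax (a s) (b s))) 0 t <=
                   RInt (fun s => exp (ms*(t-s)) * (eps * (1 * (exp (-(mu-eps)*(t-s)) * B)))) 0 t).
    { apply RInt_le; [lra| | |].
      - apply ex_RInt_cont. intros z. apply cont_mul; [smooth|]. apply cont_mul; [apply cont_const|auto].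
      - apply ex_RInt_cont. intros z. unfold B. smooth.
      - intros x Hx. apply Rmult_le_compat_l; [left; apply exp_pos|].
        apply Rmult_le_compat_l; auto. rewrite Rmult_1_l. apply key; auto. lra. }
    rewrite (is_RInt_unique _ _ _ _ (int_a ms mu eps 1 B t t ltac:(lra) ltac:(lra))) in Hint.
    assert (Ha0 : a 0 <= al * (exp (-(mu-eps)*(t-0)) * B)).
    { eapply Rle_trans; [apply H0|]. apply Rmult_le_compat_l; auto.
      eapply Rle_trans; [apply Rmax_r|]. apply key; auto; lra. }
    replace (exp (ms * t) * exp (- (mu - eps) * (t - 0))) with (exp (-(mu-ms-eps)*t)) in Hint
      by (rewrite <- exp_plus; f_equal; ring).
    replace (- (mu - eps) * (t - t)) with 0 in Hint by ring. rewrite exp_0 in Hint.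
    assert (Hms : 0 < exp (ms * t)) by apply exp_pos.
    assert (X1 : exp (ms*t) * a 0 <= exp (ms*t) * (al * (exp (-(mu-eps)*(t-0)) * B)))
      by (apply Rmult_le_compat_l; lra).
    replace (exp (ms*t) * (al * (exp (-(mu-eps)*(t-0)) * B))) with (al * B * exp (-(mu-ms-eps)*t)) in X1.
    2:{ replace (exp (-(mu-ms-eps)*t)) with (exp (ms * t) * exp (- (mu - eps) * (t - 0))) 
          by (rewrite <- exp_plus; f_equal; ring). ring. }
    rewrite (Rmult_comm _ (b t)).
    replace (b t * (((al*(mu-ms-eps) - eps) * exp (-(mu-ms-eps)*t) + eps)/(mu-ms-eps)) +
             eta * (((al*(mu-ms-eps) - eps) * exp (-(mu-ms-eps)*t) + eps)/(mu-ms-eps)))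
      with (al * B * exp (-(mu-ms-eps)*t) + 1 * B * eps / (mu - ms - eps) * (1 - exp (-(mu-ms-eps)*t)))
      by (unfold B; field; lra).
    lra.
  - apply limit_eta with (C := exp ((-mu+eps)*t)); [left; apply exp_pos|].
    intros eta Heta.
    eapply Rle_trans; [apply Rmax_r|]. eapply Rle_trans; [apply (key eta Heta 0); lra|].
    replace (- (mu - eps) * (t - 0)) with ((-mu+eps)*t) by ring. lra.
Qed.

Lemma RInt_rev (g : R -> R) t p q : (forall z, continuity_pt g z) ->
  RInt g (t - q) (t - p) = RInt (fun s => g (t - s)) p q.
Proof.
  intros Hg.
  assert (E1 := RInt_comp_lin g (-1) t p q (ex_RInt_cont g _ _ Hg)).
  assert (Hc : forall z, continuity_pt (fun s => g (t - s)) z).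
  { intros z. apply (continuity_pt_comp (fun s => t - s) g). smooth. apply Hg. }
  rewrite RInt_scal in E1 by (apply (ex_RInt_ext (fun s => g (t - s))); [intros; f_equal; ring| apply ex_RInt_cont; auto]).
  replace (RInt (fun y => g (-1 * y + t)) p q) with (RInt (fun s => g (t - s)) p q) in E1
    by (apply RInt_ext; intros; f_equal; ring).
  replace (-1 * p + t) with (t - p) in E1 by ring.
  replace (-1 * q + t) with (t - q) in E1 by ring.
  rewrite <- (opp_RInt_swap g) in E1 by (apply ex_RInt_cont; auto).
  unfold scal, opp in E1; simpl in E1. unfold mult in E1; simpl in E1. lra.
Qed.

Lemma coreB (ms mu eps be t : R) (a b : R -> R) :
  0 <= eps -> 0 < mu - ms - eps -> eps <= be * (mu - ms - eps) -> 0 <= be < 1 -> 0 <= t ->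
  (forall s, continuity_pt a s) -> (forall s, continuity_pt b s) ->
  (forall s, 0 <= a s) -> (forall s, 0 <= b s) ->
  (forall tau, 0 <= tau <= t -> a tau <= exp (ms*tau) * a 0 + RInt (fun s => exp (ms*(tau-s)) * (eps * Rmax (a s) (b s))) 0 tau) ->
  (forall sg, 0 <= sg <= t -> b sg <= exp (-mu*(t-sg)) * b t + RInt (fun s => exp (-mu*(s-sg)) * (eps * Rmax (a s) (b s))) sg t) ->
  b t <= be * a t ->
  b 0 <= ((be*(mu-ms-eps) - eps) * exp (-(mu-ms-eps)*t) + eps)/(mu-ms-eps) * a 0 /\
  a t <= exp ((ms+eps)*t) * a 0.
Proof.
  intros Heps Hc Hbe Hbe1 Ht ca cb a0 b0 HI HII H0.
  assert (cm : forall s, continuity_pt (fun s => Rmax (a s) (b s)) s) by (intros; apply cont_Rmax; auto).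
  assert (ca' : forall s, continuity_pt (fun r => b (t - r)) s).
  { intros z. apply (continuity_pt_comp (fun s => t - s) b). smooth. apply cb. }
  assert (cb' : forall s, continuity_pt (fun r => a (t - r)) s).
  { intros z. apply (continuity_pt_comp (fun s => t - s) a). smooth. apply ca. }
  assert (Hc' : 0 < (-ms) - (-mu) - eps) by lra.
  assert (Hbe' : eps <= be * ((-ms) - (-mu) - eps)) by lra.
  destruct (coreA (-mu) (-ms) eps be t (fun r => b (t - r)) (fun r => a (t - r))
              Heps Hc' Hbe' Hbe1 Ht ca' cb' (fun s => b0 _) (fun s => a0 _)) as [Q1 Q2].
  - intros r Hr. simpl.
    assert (H := HII (t - r) ltac:(lra)).
    replace (t - 0) with t by ring.
    replace (- mu * (t - (t - r))) with (-mu * r) in H by ring.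
    assert (E := RInt_rev (fun s => exp (- mu * (s - (t - r))) * (eps * Rmax (a s) (b s))) t 0 r).
    rewrite Rminus_0_r in E. rewrite E in H.
    2:{ intros z. apply cont_mul; [smooth|]. apply cont_mul; [apply cont_const|auto]. }
    eapply Rle_trans; [exact H|]. right. f_equal. apply RInt_ext. intros x _.
    rewrite Rmax_comm. f_equal. f_equal. ring.
  - intros sg Hsg. simpl.
    assert (H := HI (t - sg) ltac:(lra)).
    replace (t - t) with 0 by ring.
    replace (ms * (t - sg)) with (- - ms * (t - sg)) in H by ring.
    assert (E := RInt_rev (fun s => exp (ms * (t - sg - s)) * (eps * Rmax (a s) (b s))) t sg t).
    rewrite Rminus_diag in E. rewrite E in H.
    2:{ intros z. apply cont_mul; [smooth|]. apply cont_mul; [apply cont_const|auto]. }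
    eapply Rle_trans; [exact H|]. right. f_equal. apply RInt_ext. intros x _.
    rewrite Rmax_comm. f_equal. f_equal. ring.
  - simpl. replace (t - t) with 0 by ring. replace (t - 0) with t by ring. auto.
  - simpl in Q1, Q2. replace (t - t) with 0 in Q1, Q2 by ring. replace (t - 0) with t in Q1, Q2 by ring.
    replace (- ms - - mu - eps) with (mu - ms - eps) in Q1 by ring.
    replace (- - ms + eps) with (ms + eps) in Q2 by ring.
    rewrite Rminus_0_r in Q2. split; auto.
Qed.

Lemma plus_swap {G : AbelianGroup} (a b c : G) : plus a (plus b c) = plus b (plus a c).
Proof. rewrite !plus_assoc. f_equal. apply plus_comm. Qed.

Lemma grp_id {G : AbelianGroup} (x x' u u' : G) :
  minus x x' = plus (minus u u') (minus (minus x u) (minus x' u')).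
Proof.
  unfold minus. rewrite (opp_plus x'), opp_opp.
  rewrite (plus_comm (plus x (opp u))).
  rewrite <- !plus_assoc.
  (* u + (-u' + (-x' + (u' + (x + -u)))) *)
  rewrite (plus_swap (opp x') u').
  rewrite (plus_assoc (opp u') u'). rewrite plus_opp_l, plus_zero_l.
  rewrite (plus_swap u (opp x')). rewrite (plus_swap u x). rewrite plus_opp_r, plus_zero_r.
  apply plus_comm.
Qed.

Lemma grp_id2 {G : AbelianGroup} (y y' w w' : G) :
  minus y y' = plus (minus w w') (opp (minus (minus w y) (minus w' y'))).
Proof.
  rewrite (grp_id y y' w w'). f_equal. unfold minus. rewrite !(@opp_plus G), !(@opp_opp G).
  rewrite (plus_comm (opp w) y). f_equal. apply plus_comm.
Qed.

Definition clamp (t s : R) := Rmax 0 (Rmin t s).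

Lemma clamp_in t s : 0 <= t -> 0 <= clamp t s <= t.
Proof. intros H. unfold clamp, Rmax, Rmin. repeat destruct Rle_dec; lra. Qed.

Lemma clamp_id t s : 0 <= s <= t -> clamp t s = s.
Proof. intros H. unfold clamp, Rmax, Rmin. repeat destruct Rle_dec; lra. Qed.

Lemma clamp_cont t s : continuity_pt (clamp t) s.
Proof.
  unfold clamp.
  apply continuity_pt_ext with (f := fun s => Rmax 0 (- Rmax (-t) (-s))).
  { intros z. f_equal. unfold Rmax, Rmin. repeat destruct Rle_dec; lra. }
  apply cont_Rmax; [apply cont_const|].
  apply (continuity_pt_opp (fun z => Rmax (-t) (-z))).
  apply cont_Rmax; [apply cont_const|]. smooth.
Qed.

Lemma cont_clamp {V : UniformSpace} (f : R -> V) t s : 0 <= t -> cont_on 0 t f ->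
  continuous (fun s => f (clamp t s)) s.
Proof.
  intros Ht Hf. unfold continuous.
  apply filterlim_comp with (G := within (fun u => 0 <= u <= t) (locally (clamp t s))).
  - intros P HP. unfold within in HP.
    assert (Hc := proj1 (continuity_pt_filterlim _ _) (clamp_cont t s)).
    specialize (Hc _ HP). unfold filtermap in *.
    apply (filter_imp (fun z => 0 <= clamp t z <= t -> P (clamp t z))); auto.
    intros z Hz. apply Hz. apply clamp_in; auto.
  - apply Hf. apply clamp_in; auto.
Qed.

Lemma cont_norm_diff {V : NormedModule R_AbsRing} (f g : R -> V) t s : 0 <= t ->
  cont_on 0 t f -> cont_on 0 t g ->
  continuity_pt (fun s => norm (minus (f (clamp t s)) (g (clamp t s)))) s.
Proof.
  intros Ht Hf Hg. apply continuity_pt_filterlim.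
  apply (filterlim_comp _ _ _ (fun s => minus (f (clamp t s)) (g (clamp t s))) norm _
           (locally (minus (f (clamp t s)) (g (clamp t s))))).
  - apply (continuous_minus (fun s => f (clamp t s)) (fun s => g (clamp t s))); apply cont_clamp; auto.
  - apply filterlim_norm.
Qed.

Lemma lin_minus {V : CompleteNormedModule R_AbsRing} (T : R -> V -> V) s (u v : V) :
  C0_semigroup T -> 0 <= s -> T s (minus u v) = minus (T s u) (T s v).
Proof.
  intros [Hp [Hsc _]] Hs. unfold minus. rewrite Hp by auto.
  f_equal.
  assert (E1 : scal (opp (one : R_AbsRing)) v = opp v) by exact (@scal_opp_one (AbsRing.Ring R_AbsRing) (CompleteNormedModule.ModuleSpace R_AbsRing V) v).
  assert (E2 : scal (opp (one : R_AbsRing)) (T s v) = opp (T s v)) by exact (@scal_opp_one (AbsRing.Ring R_AbsRing) (CompleteNormedModule.ModuleSpace R_AbsRing V) (T s v)).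
  rewrite <- E1, <- E2. apply Hsc; auto.
Qed.

Lemma bridge (X Y : CompleteNormedModule R_AbsRing) (T : R -> X -> X) (U : R -> Y -> Y)
  (ms mu eps : R) (B1 : X * Y -> X) (B2 : X * Y -> Y) (t : R)
  (x1 x2 x1' x2' : X) (y1 y2 y1' y2' : Y) :
  C0_semigroup T -> C0_semigroup U ->
  (forall t x, 0 <= t -> norm (T t x) <= exp (ms * t) * norm x) ->
  (forall t y, 0 <= t -> norm (U t y) <= exp (- mu * t) * norm y) ->
  0 <= eps ->
  (forall p q : X * Y, norm (minus (B1 p) (B1 q)) <=
       eps * Rmax (norm (minus (fst p) (fst q))) (norm (minus (snd p) (snd q)))) ->
  (forall p q : X * Y, norm (minus (B2 p) (B2 q)) <=
       eps * Rmax (norm (minus (fst p) (fst q))) (norm (minus (snd p) (snd q)))) ->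
  0 <= t ->
  Hcorr T U B1 B2 t (x1, y1) (x2, y2) -> Hcorr T U B1 B2 t (x1', y1') (x2', y2') ->
  exists a b : R -> R, (forall s, continuity_pt a s) /\ (forall s, continuity_pt b s) /\
    (forall s, 0 <= a s) /\ (forall s, 0 <= b s) /\
    a 0 = norm (minus x1 x1') /\ b 0 = norm (minus y1 y1') /\
    a t = norm (minus x2 x2') /\ b t = norm (minus y2 y2') /\
    (forall tau, 0 <= tau <= t -> a tau <= exp (ms*tau) * a 0 + RInt (fun s => exp (ms*(tau-s)) * (eps * Rmax (a s) (b s))) 0 tau) /\
    (forall sg, 0 <= sg <= t -> b sg <= exp (-mu*(t-sg)) * b t + RInt (fun s => exp (-mu*(s-sg)) * (eps * Rmax (a s) (b s))) sg t).
Proof.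
  intros CT CU HT HU Heps L1 L2 Ht H1 H2.
  destruct H1 as [x [y [[cx [cy Hs]] [Hx0 [Hy0 [Hxt Hyt]]]]]]. simpl in *.
  destruct H2 as [x' [y' [[cx' [cy' Hs']] [Hx0' [Hy0' [Hxt' Hyt']]]]]]. simpl in *.
  set (a := fun s => norm (minus (x (clamp t s)) (x' (clamp t s)))).
  set (b := fun s => norm (minus (y (clamp t s)) (y' (clamp t s)))).
  assert (ca : forall s, continuity_pt a s) by (intros s; exact (cont_norm_diff x x' t s Ht cx cx')).
  assert (cb : forall s, continuity_pt b s) by (intros s; exact (cont_norm_diff y y' t s Ht cy cy')).
  assert (aE : forall s, 0 <= s <= t -> a s = norm (minus (x s) (x' s))) by (intros; unfold a; rewrite clamp_id; auto).
  assert (bE : forall s, 0 <= s <= t -> b s = norm (minus (y s) (y' s))) by (intros; unfold b; rewrite clamp_id; auto).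
  assert (cm : forall s, continuity_pt (fun s => Rmax (a s) (b s)) s) by (intros s; apply cont_Rmax; auto).
  exists a, b. repeat split; auto.
  - intros; apply norm_ge_0.
  - intros; apply norm_ge_0.
  - rewrite aE by lra. rewrite Hx0, Hx0'. reflexivity.
  - rewrite bE by lra. rewrite Hy0, Hy0'. reflexivity.
  - rewrite aE by lra. rewrite Hxt, Hxt'. reflexivity.
  - rewrite bE by lra. rewrite Hyt, Hyt'. reflexivity.
  - intros tau Htau.
    destruct (Hs tau Htau) as [Ix _]. destruct (Hs' tau Htau) as [Ix' _].
    assert (Imin := is_RInt_minus _ _ _ _ _ _ Ix Ix').
    set (g := fun s => exp (ms*(tau-s)) * (eps * Rmax (a s) (b s))).
    assert (Hg : is_RInt g 0 tau (RInt g 0 tau)).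
    { apply (@RInt_correct R_CompleteNormedModule). apply ex_RInt_cont. intros z. unfold g.
      apply cont_mul; [smooth|]. apply cont_mul; [apply cont_const|auto]. }
    assert (Hn : norm (minus (minus (x tau) (T (tau - 0) x1)) (minus (x' tau) (T (tau - 0) x1'))) <= RInt g 0 tau).
    { eapply norm_RInt_le with (f := fun s => minus (T (tau - s) (B1 (x s, y s))) (T (tau - s) (B1 (x' s, y' s))));
        [exact (proj1 Htau) | | exact Imin | exact Hg].
      intros s Hs0. rewrite <- (lin_minus T (tau - s) _ _ CT) by lra.
      eapply Rle_trans; [apply HT; lra|]. unfold g. rewrite aE, bE by lra.
      apply Rmult_le_compat_l; [left; apply exp_pos|]. apply (L1 (x s, y s) (x' s, y' s)). }
    rewrite (aE tau) by lra.
    rewrite (grp_id (x tau) (x' tau) (T (tau - 0) x1) (T (tau - 0) x1')).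
    eapply Rle_trans; [exact (@norm_triangle R_AbsRing (CompleteNormedModule.NormedModule R_AbsRing X) (minus (T (tau-0) x1) (T (tau-0) x1')) (minus (minus (x tau) (T (tau-0) x1)) (minus (x' tau) (T (tau-0) x1'))))|].
    apply Rplus_le_compat; [|exact Hn].
    rewrite <- (lin_minus T (tau - 0) _ _ CT) by lra. rewrite Rminus_0_r.
    rewrite (aE 0) by lra. rewrite Hx0, Hx0'. apply HT; lra.
  - intros sg Hsg.
    destruct (Hs sg Hsg) as [_ Iy]. destruct (Hs' sg Hsg) as [_ Iy'].
    assert (Imin := is_RInt_minus _ _ _ _ _ _ Iy Iy').
    set (g := fun s => exp (-mu*(s-sg)) * (eps * Rmax (a s) (b s))).
    assert (Hg : is_RInt g sg t (RInt g sg t)).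
    { apply (@RInt_correct R_CompleteNormedModule). apply ex_RInt_cont. intros z. unfold g.
      apply cont_mul; [smooth|]. apply cont_mul; [apply cont_const|auto]. }
    assert (Hn : norm (minus (minus (U (t - sg) y2) (y sg)) (minus (U (t - sg) y2') (y' sg))) <= RInt g sg t).
    { eapply norm_RInt_le with (f := fun s => minus (U (s - sg) (B2 (x s, y s))) (U (s - sg) (B2 (x' s, y' s))));
        [exact (proj2 Hsg) | | exact Imin | exact Hg].
      intros s Hs0. rewrite <- (lin_minus U (s - sg) _ _ CU) by lra.
      eapply Rle_trans; [apply HU; lra|]. unfold g. rewrite aE, bE by lra.
      apply Rmult_le_compat_l; [left; apply exp_pos|]. apply (L2 (x s, y s) (x' s, y' s)). }
    rewrite (bE sg) by lra.
    rewrite (grp_id2 (y sg) (y' sg) (U (t - sg) y2) (U (t - sg) y2')).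
    eapply Rle_trans; [exact (@norm_triangle R_AbsRing (CompleteNormedModule.NormedModule R_AbsRing Y) (minus (U (t - sg) y2) (U (t - sg) y2')) (opp (minus (minus (U (t - sg) y2) (y sg)) (minus (U (t - sg) y2') (y' sg)))))|].
    rewrite (@norm_opp R_AbsRing (CompleteNormedModule.NormedModule R_AbsRing Y)). apply Rplus_le_compat; [|exact Hn].
    rewrite <- (lin_minus U (t - sg) _ _ CU) by lra.
    rewrite (bE t) by lra. rewrite Hyt, Hyt'. apply HU; lra.
Qed.

Lemma Rpower_exp z t : Rpower (exp z) t = exp (z * t).
Proof. unfold Rpower. rewrite ln_exp. f_equal. ring. Qed.

Lemma Ch_le h c eps t : 0 < c -> eps <= h * c -> 0 <= t ->
  ((h*c - eps) * exp (-c*t) + eps)/c <= h.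
Proof.
  intros Hc Hh Ht.
  assert (exp (-c*t) <= 1) by (rewrite <- exp_0; apply exp_le_mono; nra).
  apply Rmult_le_reg_r with c; auto. unfold Rdiv. rewrite Rmult_assoc, Rinv_l by lra.
  assert (0 < exp (-c*t)) by apply exp_pos. nra.
Qed.

Lemma Ch_kfac mu ms eps eps1 h t : 0 < mu - ms - eps -> eps <= h * (mu - ms - eps) -> 0 < h -> eps1 <= t ->
  ((h*(mu-ms-eps) - eps) * exp (-(mu-ms-eps)*t) + eps)/(mu-ms-eps) <= kfac mu ms eps eps1 h * h.
Proof.
  intros Hc Hh Hh0 Ht. unfold kfac.
  assert (exp (-(mu-ms-eps)*t) <= exp (-(mu-ms-eps)*eps1)) by (apply exp_le_mono; nra).
  replace (((mu - ms - eps - eps / h) * exp (- (mu - ms - eps) * eps1) + eps / h) / (mu - ms - eps) * h)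
    with (((h*(mu-ms-eps) - eps) * exp (-(mu-ms-eps)*eps1) + eps)/(mu-ms-eps)) by (field; lra).
  unfold Rdiv. apply Rmult_le_compat_r; [left; apply Rinv_0_lt_compat; lra|]. nra.
Qed.

Lemma kfac_lt1 mu ms eps eps1 h : 0 < mu - ms - eps -> eps < h * (mu - ms - eps) -> 0 < h -> 0 < eps1 ->
  kfac mu ms eps eps1 h < 1.
Proof.
  intros Hc Hh Hh0 He. unfold kfac.
  assert (exp (-(mu-ms-eps)*eps1) < 1) by (rewrite <- exp_0; apply exp_increasing; nra).
  assert (Hk : eps / h < mu - ms - eps).
  { apply Rmult_lt_reg_r with h; auto. unfold Rdiv. rewrite Rmult_assoc, Rinv_l by lra. lra. }
  apply Rmult_lt_reg_r with (mu - ms - eps); auto. unfold Rdiv. rewrite Rmult_assoc, Rinv_l by lra.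
  nra.
Qed.

Theorem lemma3p4 (X Y : CompleteNormedModule R_AbsRing)
  (T : R -> X -> X) (U : R -> Y -> Y) (* U t = S(-t) *)
  (mu_s mu_u eps : R)
  (B1 : X * Y -> X) (B2 : X * Y -> Y) (alpha beta : R) :
  C0_semigroup T -> C0_semigroup U ->
  (forall t x, 0 <= t -> norm (T t x) <= exp (mu_s * t) * norm x) ->
  (forall t y, 0 <= t -> norm (U t y) <= exp (- mu_u * t) * norm y) ->
  0 <= eps ->
  (forall p q : X * Y, norm (minus (B1 p) (B1 q)) <=
       eps * Rmax (norm (minus (fst p) (fst q))) (norm (minus (snd p) (snd q)))) ->
  (forall p q : X * Y, norm (minus (B2 p) (B2 q)) <=
       eps * Rmax (norm (minus (fst p) (fst q))) (norm (minus (snd p) (snd q)))) ->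
  mu_u - mu_s - 2 * eps > 0 ->
  eps / (mu_u - mu_s - eps) <= alpha < 1 ->
  eps / (mu_u - mu_s - eps) <= beta < 1 ->
  (forall t, 0 <= t ->
     AB_cond (Hcorr T U B1 B2 t) alpha alpha (Rpower (exp (- mu_u + eps)) t)
                                 beta beta (Rpower (exp (mu_s + eps)) t)) /\
  (eps / (mu_u - mu_s - eps) < alpha -> eps / (mu_u - mu_s - eps) < beta ->
   forall eps1 t, 0 < eps1 -> eps1 <= t ->
     AB_cond (Hcorr T U B1 B2 t)
        alpha (kfac mu_u mu_s eps eps1 alpha * alpha) (Rpower (exp (- mu_u + eps)) t)
        beta (kfac mu_u mu_s eps eps1 beta * beta) (Rpower (exp (mu_s + eps)) t) /\
     kfac mu_u mu_s eps eps1 alpha < 1 /\ kfac mu_u mu_s eps eps1 beta < 1).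
Proof.
  intros CT CU HT HU Heps L1 L2 Hgap [Hal Hal1] [Hbe Hbe1].
  assert (Hc : 0 < mu_u - mu_s - eps) by lra.
  assert (Hk0 : 0 <= eps / (mu_u - mu_s - eps)) by (apply Rdiv_le_0_compat; lra).
  assert (toprod : forall h, eps / (mu_u - mu_s - eps) <= h -> eps <= h * (mu_u - mu_s - eps)).
  { intros h Hh. apply Rmult_le_compat_r with (r := mu_u - mu_s - eps) in Hh; [|lra].
    unfold Rdiv in Hh. rewrite Rmult_assoc, Rinv_l, Rmult_1_r in Hh by lra. exact Hh. }
  assert (Hal' := toprod _ Hal). assert (Hbe' := toprod _ Hbe).
  assert (core : forall t, 0 <= t -> forall x1 y1 x2 y2 x1' y1' x2' y2',
    Hcorr T U B1 B2 t (x1, y1) (x2, y2) -> Hcorr T U B1 B2 t (x1', y1') (x2', y2') ->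
    (norm (minus x1 x1') <= alpha * norm (minus y1 y1') ->
       norm (minus x2 x2') <= ((alpha*(mu_u-mu_s-eps) - eps) * exp (-(mu_u-mu_s-eps)*t) + eps)/(mu_u-mu_s-eps) * norm (minus y2 y2') /\
       norm (minus y1 y1') <= Rpower (exp (- mu_u + eps)) t * norm (minus y2 y2')) /\
    (norm (minus y2 y2') <= beta * norm (minus x2 x2') ->
       norm (minus y1 y1') <= ((beta*(mu_u-mu_s-eps) - eps) * exp (-(mu_u-mu_s-eps)*t) + eps)/(mu_u-mu_s-eps) * norm (minus x1 x1') /\
       norm (minus x2 x2') <= Rpower (exp (mu_s + eps)) t * norm (minus x1 x1'))).
  { intros t Ht x1 y1 x2 y2 x1' y1' x2' y2' H1 H2.
    destruct (bridge X Y T U mu_s mu_u eps B1 B2 t x1 x2 x1' x2' y1 y2 y1' y2'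
                CT CU HT HU Heps L1 L2 Ht H1 H2)
      as [a [b [ca [cb [a0 [b0 [Ea0 [Eb0 [Eat [Ebt [HI HII]]]]]]]]]]].
    rewrite !Rpower_exp. rewrite <- Ea0, <- Eb0, <- Eat, <- Ebt.
    split.
    - intros H. destruct (coreA mu_s mu_u eps alpha t a b Heps Hc Hal' (conj (Rle_trans _ _ _ Hk0 Hal) Hal1) Ht
                            ca cb a0 b0 HI HII H) as [Q1 Q2].
      split; auto.
    - intros H. destruct (coreB mu_s mu_u eps beta t a b Heps Hc Hbe' (conj (Rle_trans _ _ _ Hk0 Hbe) Hbe1) Ht
                            ca cb a0 b0 HI HII H) as [Q1 Q2].
      split; auto. }
  split.
  - intros t Ht x1 y1 x2 y2 x1' y1' x2' y2' H1 H2.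
    destruct (core t Ht x1 y1 x2 y2 x1' y1' x2' y2' H1 H2) as [CA CB].
    split.
    + intros H. destruct (CA H) as [Q1 Q2]. split; auto.
      eapply Rle_trans; [exact Q1|]. apply Rmult_le_compat_r; [apply norm_ge_0|].
      apply Ch_le; [lra | exact Hal' | lra].
    + intros H. destruct (CB H) as [Q1 Q2]. split; auto.
      eapply Rle_trans; [exact Q1|]. apply Rmult_le_compat_r; [apply norm_ge_0|].
      apply Ch_le; [lra | exact Hbe' | lra].
  - intros Hal2 Hbe2 eps1 t He1 Ht.
    assert (Hal0 : 0 < alpha) by lra. assert (Hbe0 : 0 < beta) by lra.
    assert (Hal'' : eps < alpha * (mu_u - mu_s - eps)).
    { apply Rmult_lt_compat_r with (r := mu_u - mu_s - eps) in Hal2; [|lra].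
      unfold Rdiv in Hal2. rewrite Rmult_assoc, Rinv_l, Rmult_1_r in Hal2 by lra. exact Hal2. }
    assert (Hbe'' : eps < beta * (mu_u - mu_s - eps)).
    { apply Rmult_lt_compat_r with (r := mu_u - mu_s - eps) in Hbe2; [|lra].
      unfold Rdiv in Hbe2. rewrite Rmult_assoc, Rinv_l, Rmult_1_r in Hbe2 by lra. exact Hbe2. }
    split; [|split; apply kfac_lt1; auto].
    intros x1 y1 x2 y2 x1' y1' x2' y2' H1 H2.
    destruct (core t ltac:(lra) x1 y1 x2 y2 x1' y1' x2' y2' H1 H2) as [CA CB].
    split.
    + intros H. destruct (CA H) as [Q1 Q2]. split; auto.
      eapply Rle_trans; [exact Q1|]. apply Rmult_le_compat_r; [apply norm_ge_0|].
      apply Ch_kfac; auto.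
    + intros H. destruct (CB H) as [Q1 Q2]. split; auto.
      eapply Rle_trans; [exact Q1|]. apply Rmult_le_compat_r; [apply norm_ge_0|].
      apply Ch_kfac; auto.
Qed.
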